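(* Let $x,y\ge 1$ and let $n\ge \max(x,y)$ be an integer for which minimal $(x,y)$ task-dependency graphs of order $n$ exist. The maximum possible number of edges of a minimal $(x,y)$ task-dependency graph of order $n$ is $0$ if $n=\max(x,y)$ (in which case $x=y$), $2n-x-y-1$ if $n=\max(x,y)+1$, and $2n-x-y-2$ if $n>\max(x,y)+1$.
   Context: A task-dependency graph is a finite directed acyclic graph (no loops, no multiple edges). A vertex is initial if it has in-degree $0$ and terminal if it has out-degree $0$; an isolated vertex counts as both initial and terminal. An $(x,y)$ task-dependency graph is a task-dependency graph with exactly $x$ initial vertices and exactly $y$ terminal vertices. A minimal $(x,y)$ task-dependency graph is an $(x,y)$ task-dependency graph such that removing any single edge produces a graph that is not an $(x,y)$ task-dependency graph. The order of a graph is its number of vertices. *)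

(* Defs.v *)
From mathcomp Require Import all_boot.
Set Implicit Arguments. Unset Strict Implicit. Unset Printing Implicit Defensive.

(* A finite directed graph on vertex set 'I_n is a relation e : rel 'I_n
   (e u v means there is an edge u -> v); a relation has no multiple edges. *)

(* acyclic: no loops and no directed cycles: an edge u -> v never has a
   (possibly empty) directed path back from v to u. *)
Definition acyclic (n : nat) (e : rel 'I_n) : Prop :=
  forall u v : 'I_n, e u v -> ~~ connect e v u.

Definition initial (n : nat) (e : rel 'I_n) (v : 'I_n) : bool :=
  [forall u, ~~ e u v].

Definition terminal (n : nat) (e : rel 'I_n) (v : 'I_n) : bool :=
  [forall w, ~~ e v w].

Definition num_initial (n : nat) (e : rel 'I_n) : nat := #|[set v | initial e v]|.
Definition num_terminal (n : nat) (e : rel 'I_n) : nat := #|[set v | terminal e v]|.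

Definition tdg (x y : nat) (n : nat) (e : rel 'I_n) : Prop :=
  acyclic e /\ num_initial e = x /\ num_terminal e = y.

Definition num_edges (n : nat) (e : rel 'I_n) : nat :=
  #|[set p : 'I_n * 'I_n | e p.1 p.2]|.

Definition remove_edge (n : nat) (e : rel 'I_n) (a b : 'I_n) : rel 'I_n :=
  [rel u v | e u v && ((u, v) != (a, b))].

Definition minimal_tdg (x y n : nat) (e : rel 'I_n) : Prop :=
  tdg x y e /\ forall a b : 'I_n, e a b -> ~ tdg x y (remove_edge e a b).

(* Main.v *)
Require Import Defs.
From mathcomp Require Import all_boot.
From mathcomp Require Import zify.
Set Implicit Arguments. Unset Strict Implicit. Unset Printing Implicit Defensive.

Lemma acyc_rank n (e : rel 'I_n) (r : 'I_n -> nat) :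
  (forall u v, e u v -> r u < r v) -> acyclic e.
Proof.
move=> hr u v euv; apply/negP => /connectP [p].
have key : forall w, path e w p -> r w <= r (last w p).
  elim: p => [|z p IH] w //= /andP [ewz pz].
  by apply: leq_trans (ltnW (hr _ _ ewz)) (IH _ pz).
move=> pth hu; have := key _ pth; rewrite -hu => h.
by have := hr _ _ euv; lia.
Qed.

Lemma card_nat n (P : pred nat) :
  #|[set v : 'I_n | P v]| = \sum_(0 <= i < n) P i.
Proof.
rewrite -sum1_card big_mkord [in RHS]big_mkcond /=.
rewrite big_mkcond /=; apply: eq_bigr => i _; rewrite inE; by case: (P i).
Qed.

Lemma card_edges n (e : rel 'I_n) :
  num_edges e = \sum_(u : 'I_n) \sum_(v : 'I_n) e u v.
Proof.
rewrite /num_edges -sum1_card pair_bigA /= big_mkcond /=.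
by apply: eq_bigr => p _; rewrite inE; case: (e p.1 p.2).
Qed.

Lemma sum_int m lo hi : \sum_(0 <= j < m) (lo <= j < hi) = minn hi m - minn lo m.
Proof.
elim: m => [|m IH]; first by rewrite big_geq //; lia.
rewrite big_nat_recr //= IH.
case: (boolP (lo <= m < hi)) => /= h; lia.
Qed.

Lemma sum_eq m p : \sum_(0 <= j < m) (j == p) = (p < m).
Proof.
elim: m => [|m IH]; first by rewrite big_geq.
rewrite big_nat_recr //= IH.
case: (boolP (m == p)) => /= /eqP h; lia.
Qed.

Lemma sum_lt m p : \sum_(0 <= j < m) (j < p) = minn p m.
Proof.
elim: m => [|m IH]; first by rewrite big_geq //; lia.
rewrite big_nat_recr //= IH.
case: (boolP (m < p)) => /= h; lia.
Qed.

Lemma num_edges_tr n (e : rel 'I_n) :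
  num_edges (fun u v => e v u) = num_edges e.
Proof.
rewrite !card_edges exchange_big /=. by [].
Qed.

Lemma card_noninit n (e : rel 'I_n) :
  #|~: [set v | initial e v]| = n - num_initial e.
Proof.
have := cardsC [set v | initial e v]; rewrite card_ord /num_initial; lia.
Qed.

Lemma noninit_in n (e : rel 'I_n) u q : e u q -> q \in ~: [set v | initial e v].
Proof.
move=> h; rewrite !inE /initial; apply/negP => /forallP /(_ u); by rewrite h.
Qed.

Definition inF n (e : rel 'I_n) :=
  [set p : 'I_n * 'I_n | e p.1 p.2 && [forall u, e u p.2 ==> (u == p.1)]].

Lemma inF_card n (e : rel 'I_n) : #|inF e| <= n - num_initial e.
Proof.
rewrite -card_noninit -(card_in_imset (f := snd)).
  apply: subset_leq_card; apply/subsetP => q /imsetP [p]; rewrite inE => /andP [h _] ->.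
  exact: noninit_in h.
move=> [a b] [a' b'] /=; rewrite !inE /= => /andP [h1 _] /andP [h2 /forallP h3] eb.
subst b'; have := h3 a; rewrite h1 /= => /eqP ->; by [].
Qed.

Lemma inF_card2 n (e : rel 'I_n) q u u' : e u q -> e u' q -> u != u' ->
  #|inF e| < n - num_initial e.
Proof.
move=> h1 h2 ne.
rewrite -card_noninit (cardsD1 q) (noninit_in h1) /= add1n ltnS.
rewrite -(card_in_imset (f := snd)).
  apply: subset_leq_card; apply/subsetP => z /imsetP [p]; rewrite inE => /andP [h /forallP h3] ->.
  rewrite !inE; apply/andP; split; last first.
    by apply/negP => /forallP /(_ p.1); rewrite h.
  apply/eqP => e2; rewrite -e2 in h1 h2; move: (h3 u) (h3 u'); rewrite h1 h2 /= => /eqP e3 /eqP e4.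
  by move: ne; rewrite e3 e4 eqxx.
move=> [a b] [a' b'] /=; rewrite !inE /= => /andP [g1 _] /andP [g2 /forallP g3] eb.
subst b'; have := g3 a; rewrite g1 /= => /eqP ->; by [].
Qed.

Lemma ub_in n (e : rel 'I_n) :
  (forall q u u', e u q -> e u' q -> u = u') -> num_edges e <= n - num_initial e.
Proof.
move=> hu; apply: leq_trans (inF_card e); apply: subset_leq_card.
apply/subsetP => p; rewrite !inE => h; rewrite h /=; apply/forallP => u.
by apply/implyP => h2; rewrite (hu _ _ _ h2 h).
Qed.

Definition locmin n (e : rel 'I_n) := forall a b, e a b ->
  (forall u, e u b -> u = a) \/ (forall w, e a w -> w = b).

Definition outF n (e : rel 'I_n) :=
  [set p : 'I_n * 'I_n | e p.1 p.2 && [forall w, e p.1 w ==> (w == p.2)]].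

Lemma outF_le n (e : rel 'I_n) : #|outF e| <= #|inF (fun a b => e b a)|.
Proof.
rewrite -(card_in_imset (f := fun p : 'I_n * 'I_n => (p.2, p.1))).
  apply: subset_leq_card; apply/subsetP => z /imsetP [[a b]].
  by rewrite /outF /inF !inE /= => h ->.
by move=> [a b] [c d] _ _ [-> ->].
Qed.

Lemma ub_both n (e : rel 'I_n) q u u' p w w' :
  locmin e -> e u q -> e u' q -> u != u' -> e p w -> e p w' -> w != w' ->
  num_edges e + 2 <= (n - num_initial e) + (n - num_terminal e).
Proof.
move=> lm h1 h2 ne g1 g2 ne'.
have c1 := inF_card2 h1 h2 ne.
have c2 : #|inF (fun a b => e b a)| < n - num_terminal e := @inF_card2 n (fun a b => e b a) p w w' g1 g2 ne'.
have c3 := outF_le e.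
have : num_edges e <= #|inF e| + #|outF e|.
  apply: leq_trans (leq_card_setU _ _).
  apply: subset_leq_card; apply/subsetP => [[a b]]; rewrite /inF /outF !inE /= => eab.
  case: (lm _ _ eab) => hh; [apply/orP; left | apply/orP; right];
    rewrite eab /=; apply/forallP => z; apply/implyP => hz; by rewrite (hh _ hz).
lia.
Qed.


Lemma rm_acyc n (e : rel 'I_n) a b : acyclic e -> acyclic (remove_edge e a b).
Proof.
move=> ac u v /andP [euv _]; apply/negP => c; have := ac _ _ euv.
move/negP; apply; move: c; apply: connect_sub => s t /andP [h _].
exact: connect1.
Qed.

Lemma min_locmin x y n (e : rel 'I_n) : minimal_tdg x y e -> locmin e.
Proof.
move=> [[ac [hx hy]] hm] a b eab.
case: (boolP [forall u, e u b ==> (u == a)]) => [/forallP h|h].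
  by left => u eub; have := h u; rewrite eub => /eqP.
case: (boolP [forall w, e a w ==> (w == b)]) => [/forallP h'|h'].
  by right => w eaw; have := h' w; rewrite eaw => /eqP.
exfalso; apply: (hm a b eab).
move/forallPn: h => [u]; rewrite negb_imply => /andP [eub nua].
move/forallPn: h' => [w]; rewrite negb_imply => /andP [eaw nwb].
split; first exact: rm_acyc.
split.
  rewrite -hx /num_initial; suff -> : [set v | initial (remove_edge e a b) v] = [set v | initial e v] by []; apply/setP => v; rewrite !inE /initial.
  apply/forallP/forallP => H z.
    case: (eqVneq (z, v) (a, b)) => [[ez ev]|ne].
      subst z v; by have := H u; rewrite /remove_edge /= eub /=; rewrite xpair_eqE (negbTE nua).
    by have := H z; rewrite /remove_edge /= ne andbT.
  by rewrite /remove_edge /= negb_and (H z).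
rewrite -hy /num_terminal; suff -> : [set v | terminal (remove_edge e a b) v] = [set v | terminal e v] by []; apply/setP => v; rewrite !inE /terminal.
apply/forallP/forallP => H z.
  case: (eqVneq (v, z) (a, b)) => [[ez ev]|ne].
    subst z v; by have := H w; rewrite /remove_edge /= eaw /=; rewrite xpair_eqE (negbTE nwb) andbF.
  by have := H z; rewrite /remove_edge /= ne andbT.
by rewrite /remove_edge /= negb_and (H z).
Qed.

Lemma locmin_min x y n (e : rel 'I_n) : tdg x y e -> locmin e -> minimal_tdg x y e.
Proof.
move=> [ac [hx hy]] lm; split; first by split.
move=> a b eab [_ [hx' hy']].
case: (lm a b eab) => H.
  have : num_initial e < num_initial (remove_edge e a b); last by lia.
  apply: proper_card; apply/properP; split.
    apply/subsetP => v; rewrite !inE /initial => /forallP h; apply/forallP => z.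
    by rewrite /remove_edge /= negb_and h.
  exists b; rewrite !inE /initial.
    apply/forallP => z; rewrite /remove_edge /= negb_and.
    case: (boolP (e z b)) => //= ezb; by rewrite (H _ ezb) eqxx.
  by apply/negP => /forallP /(_ a); rewrite eab.
have : num_terminal e < num_terminal (remove_edge e a b); last by lia.
apply: proper_card; apply/properP; split.
  apply/subsetP => v; rewrite !inE /terminal => /forallP h; apply/forallP => z.
  by rewrite /remove_edge /= negb_and h.
exists a; rewrite !inE /terminal.
  apply/forallP => z; rewrite /remove_edge /= negb_and.
  case: (boolP (e a z)) => //= eaz; by rewrite (H _ eaz) eqxx.
by apply/negP => /forallP /(_ b); rewrite eab.
Qed.

Lemma sumP m c d f k pt : c + d + f <= pt ->
  \sum_(0 <= j < m) ((c <= j < c+d+f) || (k && (j == pt))) =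
  minn (c+d+f) m - minn c m + (k && (pt < m)).
Proof.
move=> h; elim: m => [|m IH]; first by rewrite big_geq //; case: k; lia.
rewrite big_nat_recr //= IH.
case: (eqVneq m pt) => [->|ne]; case: k IH => IH; lia.
Qed.

Lemma sumQ m c d k ps : c + d <= ps ->
  \sum_(0 <= j < m) ((k && (j == ps)) || (j < c + d)) =
  (k && (ps < m)) + minn (c+d) m.
Proof.
move=> h; elim: m => [|m IH]; first by rewrite big_geq //; case: k; lia.
rewrite big_nat_recr //= IH.
case: (eqVneq m ps) => [->|ne]; case: k IH => IH; lia.
Qed.

Lemma sumRow m c d f i ps pt : c + d + f <= pt -> c + d + f <= ps ->
  \sum_(0 <= j < m) (((i == ps) && (c <= j < c+d+f)) || ((i < c+d) && (j == pt))) =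
  (i == ps) * (minn (c+d+f) m - minn c m) + (i < c+d) * (pt < m).
Proof.
move=> h h0; elim: m => [|m IH]; first by rewrite big_geq //; lia.
rewrite big_nat_recr //= IH.
case: (eqVneq i ps) => [->|ne]; case: (eqVneq m pt) => [->|ne2]; lia.
Qed.





Lemma sumCol m ps K L cd :
  \sum_(0 <= i < m) ((i == ps) * K + (i < cd) * L) = (ps < m) * K + minn cd m * L.
Proof.
by rewrite big_split /= -!big_distrl /= sum_eq sum_lt.
Qed.

Definition G n c d f ps pt : rel 'I_n := fun u v =>
  ((val u == ps) && (c <= val v < c+d+f)) || ((val u < c+d) && (val v == pt)).

Lemma G_all n c d f ps pt :
  c + d + f <= ps -> c + d + f <= pt -> ps != pt ->
  (0 < d + f -> ps < n) -> (0 < c + d -> pt < n) -> c + d + f <= n ->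
  [/\ minimal_tdg (n - (d+f) - (0 < c+d)) (n - (0 < d+f) - (c+d)) (@G n c d f ps pt),
      num_initial (@G n c d f ps pt) = n - (d+f) - (0 < c+d),
      num_terminal (@G n c d f ps pt) = n - (0 < d+f) - (c+d) &
      num_edges (@G n c d f ps pt) = (d+f) + (c+d)].
Proof.
move=> h1 h2 h3 h4 h5 h6.
set e := @G n c d f ps pt.
have ac : acyclic e.
  apply: (@acyc_rank _ _ (fun u : 'I_n => if val u == ps then 0 else if val u == pt then 2 else 1)).
  move=> u v /orP [/andP [/eqP hu hv] | /andP [hu /eqP hv]].
    rewrite hu eqxx.
    have -> : (val v == ps) = false by apply/eqP; lia.
    by have -> : (val v == pt) = false by apply/eqP; lia.
  rewrite hv eqxx; have -> : (pt == ps) = false by rewrite eq_sym (negbTE h3).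
  have -> : (val u == ps) = false by apply/eqP; lia.
  by have -> : (val u == pt) = false by apply/eqP; lia.
have ni : n - num_initial e = (d+f) + (0 < c+d).
  rewrite -card_noninit.
  have -> : ~: [set v | initial e v] =
      [set v : 'I_n | (c <= val v < c+d+f) || ((0 < c+d) && (val v == pt))].
    apply/setP => v; rewrite !inE /initial; apply/idP/idP.
      move/forallPn => [u]; rewrite negbK => /orP [/andP [_ h] | /andP [hu hv]].
        by rewrite h.
      by rewrite hv andbT; apply/orP; right; lia.
    move/orP => [h | /andP [k /eqP hv]]; apply/forallPn.
      have hp : ps < n by apply: h4; lia.
      by exists (Ordinal hp); rewrite negbK /e /G /= eqxx h.
    have hp : 0 < n by have := h5 k; lia.
    by exists (Ordinal hp); rewrite negbK /e /G /= hv eqxx k orbT.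
  rewrite (card_nat n (fun j => (c <= j < c+d+f) || ((0<c+d) && (j == pt)))) sumP //.
  case: (posnP (c+d)) => hk /=; [|have := h5 hk]; lia.
have nt : n - num_terminal e = (0 < d+f) + (c+d).
  have -> : num_terminal e = num_initial (fun a b => e b a) by [].
  rewrite -card_noninit.
  have -> : ~: [set v | initial (fun a b => e b a) v] =
      [set v : 'I_n | ((0 < d+f) && (val v == ps)) || (val v < c+d)].
    apply/setP => v; rewrite !inE /initial; apply/idP/idP.
      move/forallPn => [u]; rewrite negbK => /orP [/andP [hv hu] | /andP [hv _]].
        by rewrite hv andbT; apply/orP; left; lia.
      by rewrite hv orbT.
    move/orP => [/andP [k /eqP hv] | h]; apply/forallPn.
      have hp : c < n by lia.
      exists (Ordinal hp); rewrite negbK /e /G /= hv eqxx /=; apply/orP; left; lia.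
    have hp : pt < n by apply: h5; lia.
    by exists (Ordinal hp); rewrite negbK /e /G /= h eqxx orbT.
  rewrite (card_nat n (fun j => ((0 < d+f) && (j == ps)) || (j < c+d))) sumQ; last by lia.
  case: (posnP (d+f)) => hk /=; [|have := h4 hk]; lia.
have lei : num_initial e <= n by rewrite -[n in _ <= n]card_ord max_card.
have let_ : num_terminal e <= n by rewrite -[n in _ <= n]card_ord max_card.
have ne : num_edges e = (d+f) + (c+d).
  rewrite card_edges.
  rewrite (eq_bigr (fun u : 'I_n => (val u == ps) * (minn (c+d+f) n - minn c n) + (val u < c+d) * (pt < n))); last first.
    move=> u _; rewrite -(@sumRow n c d f (val u) ps pt h2 h1) big_mkord.
    by apply: eq_bigr.
  rewrite -(big_mkord xpredT (fun i => (i == ps) * (minn (c+d+f) n - minn c n) + (i < c+d) * (pt < n))).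
  rewrite sumCol.
  case: (posnP (d+f)) => hk; [|have := h4 hk => ->]; (case: (posnP (c+d)) => hk2; [|have := h5 hk2 => ->]); lia.
have mt : minimal_tdg (n - (d+f) - (0 < c+d)) (n - (0 < d+f) - (c+d)) e.
  apply: locmin_min.
    split => //; split; lia.
  move=> a b /orP [/andP [/eqP ha hb] | /andP [ha /eqP hb]].
    left => u /orP [/andP [/eqP hu _] | /andP [_ /eqP hb2]]; first by apply: val_inj; rewrite hu ha.
    lia.
  right => w /orP [/andP [/eqP hu _] | /andP [_ /eqP hb2]]; first lia.
  by apply: val_inj; rewrite hb2 hb.
split => //; lia.
Qed.

Lemma noedge n (e : rel 'I_n) : num_initial e = n -> forall u v, ~~ e u v.
Proof.
move=> h u v; apply/negP => euv.
have h0 : #|~: [set v | initial e v]| = 0 by rewrite card_noninit h subnn.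
by have := card0_eq h0 v; rewrite (noninit_in euv).
Qed.

Lemma noedge_cnt n (e : rel 'I_n) : (forall u v, ~~ e u v) ->
  num_edges e = 0 /\ num_terminal e = n /\ num_initial e = n.
Proof.
move=> h; split.
  apply/eqP; rewrite cards_eq0; apply/eqP/setP => p; rewrite !inE.
  exact: negbTE (h _ _).
rewrite /num_terminal /num_initial.
have -> : [set v | terminal e v] = setT.
  by apply/setP => v; rewrite !inE; apply/forallP => w; exact: h.
have -> : [set v | initial e v] = setT.
  by apply/setP => v; rewrite !inE; apply/forallP => w; exact: h.
by rewrite cardsT card_ord.
Qed.

Lemma arith3 x y n d c f : 1 <= x -> 1 <= y -> x + 2 <= n -> y + 2 <= n ->
  d = n - x - y -> c = n - y - 1 - d -> f = n - x - 1 - d ->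
  [/\ c + d + f + 2 <= n, 0 < d + f, 0 < c + d, (d+f) + (c+d) = 2*n-x-y-2 &
      n - (d+f) - 1 = x /\ n - 1 - (c+d) = y].
Proof.
move=> h1 h2 h3 h4 hd hc hf.
case: (leqP (x + y) n) => hxy.
  have e1 : d + x + y = n by lia.
  have e2 : c = x - 1 by lia.
  have e3 : f = y - 1 by lia.
  subst c f; split; lia.
have e1 : d = 0 by lia.
subst d; have e2 : c = n - y - 1 by lia.
have e3 : f = n - x - 1 by lia.
subst c f; split; lia.
Qed.

Theorem mainTheorem1 (x y n : nat) :
  1 <= x -> 1 <= y -> maxn x y <= n ->
  (exists e : rel 'I_n, minimal_tdg x y e) ->
  let M := if n == maxn x y then 0
           else if n == (maxn x y).+1 then 2 * n - x - y - 1
           else 2 * n - x - y - 2 in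
  (n = maxn x y -> x = y) /\
  (exists e : rel 'I_n, minimal_tdg x y e /\ num_edges e = M) /\
  (forall e : rel 'I_n, minimal_tdg x y e -> num_edges e <= M).
Proof.
move=> hx hy hn [e0 me0] M.
have eqcase : forall e : rel 'I_n, minimal_tdg x y e -> n = maxn x y ->
    num_edges e = 0 /\ x = n /\ y = n.
  move=> e [[_ [ix iy]] _] hm.
  case: (leqP y x) => hxy.
    have hxn : x = n by lia.
    have ix' : num_initial e = n by rewrite ix.
    have [h1 [h2 _]] := noedge_cnt (noedge ix').
    split => //; split => //; lia.
  have hyn : y = n by lia.
  have iy' : num_initial (fun a b => e b a) = n by move: iy; rewrite /num_terminal /num_initial /terminal /initial => ->.
  have [h1 [h2 h3]] := noedge_cnt (noedge iy').
  rewrite num_edges_tr in h1.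
  have h2' : num_initial e = n := h2.
  split => //; split; lia.
have ub : forall e : rel 'I_n, minimal_tdg x y e -> num_edges e <= M.
  move=> e me; rewrite /M.
  case: (eqVneq n (maxn x y)) => [hm|hm].
    by have [-> _] := eqcase e me hm.
  move: (me) => [[_ [ix iy]] _].
  have lm := min_locmin me.
  have hn1 : maxn x y < n by rewrite ltn_neqAle eq_sym hm.
  case: (boolP [exists q, exists u, exists u', e u q && e u' q && (u != u')]) => din.
    case: (boolP [exists p, exists w, exists w', e p w && e p w' && (w != w')]) => dout.
      move/existsP: din => [q /existsP [u /existsP [u' /andP [/andP [h1 h2] h3]]]].
      move/existsP: dout => [p /existsP [w /existsP [w' /andP [/andP [g1 g2] g3]]]].
      have := ub_both lm h1 h2 h3 g1 g2 g3; rewrite ix iy.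
      case: (eqVneq n (maxn x y).+1) => h; lia.
    have : num_edges (fun a b => e b a) <= n - num_initial (fun a b => e b a).
      apply: ub_in => q u u' h1 h2; apply/eqP; apply/negPn/negP => ne; move/negP: dout; apply.
      apply/existsP; exists q; apply/existsP; exists u; apply/existsP; exists u'.
      by rewrite h1 h2 ne.
    rewrite num_edges_tr.
    have -> : num_initial (fun a b => e b a) = y by [].
    case: (eqVneq n (maxn x y).+1) => h; lia.
  have : num_edges e <= n - num_initial e.
    apply: ub_in => q u u' h1 h2; apply/eqP; apply/negPn/negP => ne; move/negP: din; apply.
    apply/existsP; exists q; apply/existsP; exists u; apply/existsP; exists u'.
    by rewrite h1 h2 ne.
  rewrite ix.
  case: (eqVneq n (maxn x y).+1) => h; lia.
split.
  by move=> hm; have [_ [h1 h2]] := eqcase e0 me0 hm; lia.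
split => //.
case: (eqVneq n (maxn x y)) => [hm|hm].
  exists e0; split => //; have [-> _] := eqcase e0 me0 hm; by rewrite /M hm eqxx.
have hn1 : maxn x y < n by rewrite ltn_neqAle eq_sym hm.
case: (eqVneq n (maxn x y).+1) => [hm1|hm1].
  case: (eqVneq x (n.-1)) => [hx1|hx1].
    have := @G_all n (n-y) 0 0 (n-y).+1 (n-y) ltac:(lia) ltac:(lia) ltac:(lia) ltac:(lia) ltac:(lia) ltac:(lia).
    move=> [m1 _ _ ed1].
    have E1 : n - (0 + 0) - (0 < n - y + 0) = x by lia.
    have E2 : n - (0 < 0 + 0) - (n - y + 0) = y by lia.
    rewrite E1 E2 in m1.
    exists (@G n (n-y) 0 0 (n-y).+1 (n-y)); split; first exact: m1.
    rewrite ed1 /M (negbTE hm) -hm1 eqxx; clear m1; lia.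
  have := @G_all n 0 0 (n-x) (n-x) (n-x).+1 ltac:(lia) ltac:(lia) ltac:(lia) ltac:(lia) ltac:(lia) ltac:(lia).
  move=> [m1 _ _ ed1].
  have E1 : n - (0 + (n - x)) - (0 < 0 + 0) = x by lia.
  have E2 : n - (0 < 0 + (n - x)) - (0 + 0) = y by lia.
  rewrite E1 E2 in m1.
  exists (@G n 0 0 (n-x) (n-x) (n-x).+1); split; first exact: m1.
  rewrite ed1 /M (negbTE hm) -hm1 eqxx; clear m1; lia.
have hx2 : x + 2 <= n.
  have : (maxn x y).+1 < n by rewrite ltn_neqAle eq_sym hm1 hn1.
  move=> h; have := leq_maxl x y; have := leq_maxr x y; move: h; clear; lia.
have hy2 : y + 2 <= n.
  have : (maxn x y).+1 < n by rewrite ltn_neqAle eq_sym hm1 hn1.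
  move=> h; have := leq_maxl x y; have := leq_maxr x y; move: h; clear; lia.
have [d hd] : {d | d = n - x - y} by exists (n - x - y).
have [c hc] : {c | c = n - y - 1 - d} by exists (n - y - 1 - d).
have [f hf] : {f | f = n - x - 1 - d} by exists (n - x - 1 - d).
have [a1 a2 a3 a4 [a5 a6]] := arith3 hx hy hx2 hy2 hd hc hf.
have := @G_all n c d f (c+d+f) (c+d+f).+1 (leqnn _) (leqnSn _)
  ltac:(by rewrite ltn_eqF) ltac:(move=> _; clear -a1; lia) ltac:(move=> _; clear -a1; lia)
  ltac:(clear -a1; lia).
move=> [m1 _ _ ed1].
have E1 : n - (d + f) - (0 < c + d) = x by rewrite a3.
have E2 : n - (0 < d + f) - (c + d) = y by rewrite a2.
rewrite E1 E2 in m1.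
exists (@G n c d f (c+d+f) (c+d+f).+1); split; first exact: m1.
rewrite ed1 /M (negbTE hm) (negbTE hm1) a4; by [].
Qed.
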